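(* Let $\mathcal{B}=\langle V,F,E\rangle$ be a finite bipartite graph and $W\subseteq V$ such that the subgraph $\mathcal{B}'$ of $\mathcal{B}$ induced by $(V\setminus W)\cup F$ is self-contained. Then for every perfect matching $M$ of $\mathcal{B}'$, the output of Algorithm 2 (causal ordering via the perfect matching $M$) applied to $(W,\mathcal{B})$ coincides with the output of Algorithm 1 applied to $(W,\mathcal{B})$.
   Context: A bipartite graph $\mathcal{B}=\langle V,F,E\rangle$ has disjoint vertex sets $V$, $F$ and undirected edges $(v-f)$ with $v\in V$, $f\in F$; $\mathrm{adj}_{\mathcal{B}}(X)$ denotes the set of vertices adjacent to some vertex of $X$. A set $F'\subseteq F$ is self-contained if $|F'|=|\mathrm{adj}_{\mathcal{B}}(F')|$ and $|F''|\le|\mathrm{adj}_{\mathcal{B}}(F'')|$ for all $F''\subseteq F'$; $\mathcal{B}$ is self-contained if $|F|=|V|$ and $F$ is self-contained; a non-empty self-contained set is minimal self-contained if no non-empty strict subset is self-contained. A matching is a set of edges with no common endpoints; it is perfect if every vertex is matched. For a matching $M$ and a set of vertices $X$, $M(X)$ is the set of vertices matched by $M$ to some vertex of $X$. A directed cluster graph is a pair $\langle\mathcal{V},\mathcal{E}\rangle$ with $\mathcal{V}$ a partition of a vertex set and $\mathcal{E}$ a set of edges $x\to C$ from vertices to clusters. Algorithm 1. Initialize $\mathcal{E}=\emptyset$, $\mathcal{V}=\{\{w\}:w\in W\}$, $\mathcal{B}'=\langle V',F',E'\rangle$ the subgraph induced by $(V\setminus W)\cup F$. While $\mathcal{B}'$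 is not the null graph: choose a minimal self-contained set $S_F\subseteq F'$ of $\mathcal{B}'$; let $C=S_F\cup\mathrm{adj}_{\mathcal{B}'}(S_F)$; add $C$ to $\mathcal{V}$; for every $v\in\mathrm{adj}_{\mathcal{B}}(S_F)\setminus\mathrm{adj}_{\mathcal{B}'}(S_F)$ add $v\to C$ to $\mathcal{E}$; replace $\mathcal{B}'$ by its subgraph induced by $(V'\cup F')\setminus C$. Output $\langle\mathcal{V},\mathcal{E}\rangle$. (Its output is independent of the choices made.) Algorithm 2 (with perfect matching $M$ of $\mathcal{B}'$). (i) Orient edges: form the directed graph $\mathcal{G}(\mathcal{B},M)$ on $V\cup F$ containing, for each $(v-f)\in E$, the edge $f\to v$ if $(v-f)\in M$ and the edge $v\to f$ otherwise. (ii) Construct clusters: let $\mathcal{V}'$ be the partition of $V\cup F$ into strongly connected components of $\mathcal{G}(\mathcal{B},M)$, and $\mathcal{E}'=\{x\to \mathrm{cl}(w): (x\to w)\text{ in }\mathcal{G}(\mathcal{B},M),\ x\notin\mathrm{cl}(w)\}$, where $\mathrm{cl}(w)$ is the component containing $w$. (iii) Merge clusters: $\mathcal{V}=\{S\cup M(S):S\in\mathcal{V}'\}$ and $\mathcal{E}=\{x\to S\cup M(S): (x\to S)\in\mathcal{E}',\ x\notin M(S)\}$. Output $\langle\mathcal{V},\mathcal{E}\rangle$. *)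

(* Defs.v *)
From mathcomp Require Import all_boot.
Set Implicit Arguments. Unset Strict Implicit. Unset Printing Implicit Defensive.

(* A bipartite graph <V,F,E> on a finite carrier T.  An edge (v - f) is
   stored as the pair (v, f) with v in V and f in F. *)
Record bigraph (T : finType) := Bigraph {
  bV : {set T};
  bF : {set T};
  bE : {set T * T} }.

Definition wf_bigraph (T : finType) (B : bigraph T) : Prop :=
  [disjoint bV B & bF B] /\
  (forall e, e \in bE B -> e.1 \in bV B /\ e.2 \in bF B).

Definition induced (T : finType) (B : bigraph T) (U : {set T}) : bigraph T :=
  Bigraph (bV B :&: U) (bF B :&: U) [set e in bE B | (e.1 \in U) && (e.2 \in U)].

Definition bedge (T : finType) (B : bigraph T) (x y : T) : bool :=
  ((x, y) \in bE B) || ((y, x) \in bE B).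

Definition adj (T : finType) (B : bigraph T) (X : {set T}) : {set T} :=
  [set y | [exists x in X, bedge B x y]].

Definition sc_set (T : finType) (B : bigraph T) (S : {set T}) : Prop :=
  S \subset bF B /\ #|S| = #|adj B S| /\
  (forall S2 : {set T}, S2 \subset S -> #|S2| <= #|adj B S2|).

Definition self_contained (T : finType) (B : bigraph T) : Prop :=
  #|bF B| = #|bV B| /\ sc_set B (bF B).

Definition minimal_sc (T : finType) (B : bigraph T) (S : {set T}) : Prop :=
  S != set0 /\ sc_set B S /\
  (forall S2 : {set T}, S2 \proper S -> S2 != set0 -> ~ sc_set B S2).

Definition null_graph (T : finType) (B : bigraph T) : Prop :=
  bV B = set0 /\ bF B = set0.

Definition is_matching (T : finType) (B : bigraph T) (M : {set T * T}) : Prop :=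
  M \subset bE B /\
  (forall e1 e2, e1 \in M -> e2 \in M -> (e1.1 = e2.1 \/ e1.2 = e2.2) -> e1 = e2).

Definition perfect_matching (T : finType) (B : bigraph T) (M : {set T * T}) : Prop :=
  is_matching B M /\
  (forall x, x \in bV B :|: bF B -> exists2 e, e \in M & (e.1 = x \/ e.2 = x)).

Definition matched (T : finType) (M : {set T * T}) (X : {set T}) : {set T} :=
  [set y | [exists x in X, ((x, y) \in M) || ((y, x) \in M)]].

(* directed cluster graph: (clusters, edges x -> C) *)
Definition cgraph (T : finType) := ({set {set T}} * {set T * {set T}})%type.

(* alg1_from B U G G' : starting with current B' = induced B U and
   accumulated cluster graph G, some run of the loop outputs G'. *)
Inductive alg1_from (T : finType) (B : bigraph T) :
    {set T} -> cgraph T -> cgraph T -> Prop :=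
| alg1_stop U G : null_graph (induced B U) -> alg1_from B U G G
| alg1_step U G S G' :
    minimal_sc (induced B U) S ->
    alg1_from B (U :\: (S :|: adj (induced B U) S))
      ((S :|: adj (induced B U) S) |: G.1,
       G.2 :|: [set (v, S :|: adj (induced B U) S)
                 | v in adj B S :\: adj (induced B U) S]) G' ->
    alg1_from B U G G'.

Definition alg1_output (T : finType) (B : bigraph T) (W : {set T}) (G : cgraph T) : Prop :=
  alg1_from B ((bV B :\: W) :|: bF B) ([set [set w] | w in W], set0) G.

(* oriented graph G(B,M): f -> v if (v-f) in M, v -> f otherwise *)
Definition dedge (T : finType) (B : bigraph T) (M : {set T * T}) : rel T :=
  fun x y => (((y, x) \in bE B) && ((y, x) \in M)) ||
             (((x, y) \in bE B) && ((x, y) \notin M)).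

Definition scc (T : finType) (B : bigraph T) (M : {set T * T}) (w : T) : {set T} :=
  [set y in bV B :|: bF B | connect (dedge B M) w y && connect (dedge B M) y w].

Definition alg2_clusters (T : finType) (B : bigraph T) (M : {set T * T}) : cgraph T :=
  ([set scc B M x | x in bV B :|: bF B],
   [set (x, scc B M w) | x in bV B :|: bF B, w in bV B :|: bF B
      & dedge B M x w && (x \notin scc B M w)]).

Definition alg2_output (T : finType) (B : bigraph T) (M : {set T * T}) : cgraph T :=
  let G' := alg2_clusters B M in
  ([set S :|: matched M S | S in G'.1],
   [set (p.1, p.2 :|: matched M p.2) | p in G'.2 & p.1 \notin matched M p.2]).

(* Main.v *)
Require Import Defs.
From mathcomp Require Import all_boot.
From Stdlib Require Import Classical.
Set Implicit Arguments. Unset Strict Implicit. Unset Printing Implicit Defensive.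

Lemma closed_connect_in (T : finType) (e : rel T) (A : {set T}) :
  (forall x y, x \in A -> e x y -> y \in A) ->
  forall x y, x \in A -> connect e x y -> y \in A.
Proof.
move=> cl x y xA /connectP [p pp ->].
elim: p x xA pp => //= z p IH x xA /andP [exz pz].
exact: IH (cl _ _ xA exz) pz.
Qed.

Lemma connect_noin (T : finType) (e : rel T) x y :
  (forall z, ~~ e z y) -> connect e x y -> x = y.
Proof.
move=> H /connectP [p]; case/lastP: p => [|p z] /=; first by move=> _ ->.
rewrite rcons_path last_rcons => /andP [_ ez] Ez; subst z.
by rewrite (negbTE (H _)) in ez.
Qed.

Lemma in_sep (T : finType) (X : {set (T * {set T})}) (P : pred (T * {set T})) x :
  (x \in [set y in X | P y]) = (x \in X) && P x.
Proof. by rewrite inE. Qed.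
Lemma in_sep1 (T : finType) (X : {set {set T}}) (P : pred {set T}) x :
  (x \in [set y in X | P y]) = (x \in X) && P x.
Proof. by rewrite inE. Qed.



Section Main.
Variables (T : finType) (B : bigraph T) (W : {set T}) (M : {set T * T}).
Hypothesis wfB : wf_bigraph B.
Hypothesis WV : W \subset bV B.
Definition U0 := (bV B :\: W) :|: bF B.
Hypothesis pmM : perfect_matching (induced B U0) M.

Let VF := bV B :|: bF B.

Lemma disjVF x : x \in bV B -> x \in bF B -> False.
Proof. by case: wfB => D _ xV; rewrite (disjointFr D xV). Qed.

Lemma edgeVF e : e \in bE B -> e.1 \in bV B /\ e.2 \in bF B.
Proof. by case: wfB => _; apply. Qed.

Lemma ME e : e \in M -> [/\ e \in bE B, e.1 \in U0 & e.2 \in U0].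
Proof.
case: pmM => [[sub _] _] eM; move: (subsetP sub e eM).
by rewrite /= inE => /andP [-> /andP [-> ->]].
Qed.

Lemma U0VF x : x \in U0 -> x \in VF.
Proof. by rewrite !inE => /orP [/andP [_ ->]|->] //; rewrite orbT. Qed.

Lemma FU0 x : x \in bF B -> x \in U0.
Proof. by rewrite !inE => ->; rewrite orbT. Qed.

Lemma WnU0 x : x \in W -> x \notin U0.
Proof.
move=> xW; have xV := subsetP WV x xW.
rewrite !inE xW /=; apply/negP => xF; exact: disjVF xV xF.
Qed.

Definition Mr x y := ((x, y) \in M) || ((y, x) \in M).

Lemma Mr_sym x y : Mr x y = Mr y x.
Proof. by rewrite /Mr orbC. Qed.

Lemma Mr_U0 x y : Mr x y -> x \in U0.
Proof. by case/orP => /ME [_ h1 h2]. Qed.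

Lemma Mr_uniq x y y' : Mr x y -> Mr x y' -> y = y'.
Proof.
case: pmM => [[_ mat] _].
have H1 : forall a b c, (a, b) \in M -> (c, a) \in M -> False.
  move=> a b c h1 h2.
  have [/edgeVF [aV _] _ _] := ME h1; have [/edgeVF [_ aF] _ _] := ME h2.
  exact: disjVF aV aF.
case/orP => h1 /orP [] h2.
- by have := mat _ _ h1 h2 (or_introl erefl); case.
- by case: (H1 _ _ _ h1 h2).
- by case: (H1 _ _ _ h2 h1).
- by have := mat _ _ h1 h2 (or_intror erefl); case.
Qed.

Definition m x := if [pick y | Mr x y] is Some y then y else x.

Lemma Mr_m x : x \in U0 -> Mr x (m x).
Proof.
move=> xU; rewrite /m; case: pickP => [y //|H]; exfalso.
case: pmM => _ /(_ x) [].
  by rewrite /= in_setU !in_setI xU !andbT -in_setU; exact: U0VF.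
move=> [a b] eM /= [ea|ea]; subst.
- by have := H b; rewrite /Mr eM.
- by have := H a; rewrite /Mr eM orbT.
Qed.

Lemma MrE x y : Mr x y -> y = m x.
Proof. move=> h; exact: Mr_uniq h (Mr_m (Mr_U0 h)). Qed.

Lemma mU0 x : x \in U0 -> m x \in U0.
Proof. by move=> /Mr_m; rewrite Mr_sym; apply: Mr_U0. Qed.

Lemma mK x : x \in U0 -> m (m x) = x.
Proof. by move=> /Mr_m; rewrite Mr_sym => /MrE <-. Qed.

Lemma m_inj : {in U0 &, injective m}.
Proof. move=> x y xU yU e. have := mK xU. rewrite e (mK yU). by []. Qed.

Lemma mF x : x \in bF B -> (m x, x) \in M.
Proof.
move=> xF; case/orP: (Mr_m (FU0 xF)) => // /ME [/edgeVF [xV _] _ _].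
by case: (disjVF xV xF).
Qed.

Lemma mFV x : x \in bF B -> m x \in bV B.
Proof. by move=> /mF /ME [/edgeVF [] ]. Qed.

Lemma mV x : x \in bV B -> x \in U0 -> (x, m x) \in M.
Proof.
move=> xV xU; case/orP: (Mr_m xU) => // /ME [/edgeVF [_ xF] _ _].
by case: (disjVF xV xF).
Qed.

Lemma mVF x : x \in bV B -> x \in U0 -> m x \in bF B.
Proof. by move=> xV xU; case: (ME (mV xV xU)) => /edgeVF []. Qed.

Lemma matchedP (X : {set T}) y :
  reflect (exists2 x, x \in X & x \in U0 /\ y = m x) (y \in matched M X).
Proof.
rewrite inE; apply: (iffP existsP) => [[x /andP [xX h]]|[x xX [xU ->]]].
  by exists x => //; split; [exact: Mr_U0 h | exact: MrE h].
by exists x; rewrite xX; exact: Mr_m.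
Qed.

Notation dE := (dedge B M).

Lemma dedge_cases x y : dE x y ->
  ((y, x) \in M /\ x = m y) \/ ((x, y) \in bE B /\ (x, y) \notin M).
Proof.
case/orP => /andP [h1 h2]; last by right.
by left; split => //; apply: MrE; rewrite /Mr h2.
Qed.

Lemma sccE x y : (y \in scc B M x) = [&& y \in VF, connect dE x y & connect dE y x].
Proof. by rewrite inE. Qed.

Definition cl x := scc B M x :|: matched M (scc B M x).

Lemma cl_self x : x \in VF -> x \in cl x.
Proof. by move=> xVF; rewrite inE sccE xVF !connect0. Qed.

Lemma ClP K : reflect (exists2 x, x \in VF & K = cl x) (K \in (alg2_output B M).1).
Proof.
apply: (iffP imsetP) => [[S /imsetP [x xVF ->] ->]|[x xVF ->]].
  by exists x.
by exists (scc B M x) => //; apply: imset_f.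
Qed.

Lemma EdP x K : ((x, K) \in (alg2_output B M).2) <->
  exists w, [/\ w \in VF, x \in VF, dE x w, x \notin cl w & K = cl w].
Proof.
split.
  case/imsetP => [[a S]]; rewrite inE /= => /andP [/imset2P [a' w a'VF]].
  rewrite inE => /andP [wVF /andP [dw nS]] [-> ->] nM [-> ->].
  by exists w; split => //; rewrite inE negb_or nS.
case=> w [wVF xVF dw nc ->].
apply/imsetP; exists (x, scc B M w) => //.
move: nc; rewrite inE negb_or => /andP [nS nM].
rewrite inE /= nM andbT; apply/imset2P; exists x w => //.
by rewrite inE wVF dw nS.
Qed.


Lemma dE_mF f : f \in bF B -> dE f (m f).
Proof. by move=> fF; have [e _ _] := ME (mF fF); rewrite /dedge e (mF fF). Qed.

Lemma adjBP (X : {set T}) y : X \subset bF B -> y \in adj B X ->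
  exists2 x, x \in X & (y, x) \in bE B.
Proof.
move=> XF; rewrite inE => /existsP [x /andP [xX]].
case/orP => e; last by exists x.
by case: (edgeVF e) => /= xV _; case: (disjVF xV (subsetP XF x xX)).
Qed.

Lemma adjB_intro (X : {set T}) x y : x \in X -> (y, x) \in bE B -> y \in adj B X.
Proof. move=> xX e; rewrite inE; apply/existsP; exists x; by rewrite xX /bedge e orbT. Qed.

Definition fwd (U : {set T}) := forall x y, x \in U -> dE x y -> y \in U.
Definition Inv (U : {set T}) :=
  [/\ U \subset U0, fwd U & forall x, x \in U0 -> (m x \in U) = (x \in U)].

Definition Gof (U : {set T}) : cgraph T :=
  ([set K in (alg2_output B M).1 | ~~ (K \subset U)],
   [set p in (alg2_output B M).2 | ~~ (p.2 \subset U)]).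

Section Step.
Variable U : {set T}.
Hypothesis IU : Inv U.
Let BU := induced B U.

Lemma UU0 x : x \in U -> x \in U0.
Proof. by case: IU => s _ _; apply: (subsetP s). Qed.

Lemma Um x : x \in U0 -> (m x \in U) = (x \in U).
Proof. by case: IU => _ _; apply. Qed.

Lemma adjBUP (X : {set T}) y : X \subset bF B -> y \in adj BU X ->
  exists2 x, x \in X & [/\ (y, x) \in bE B, y \in U & x \in U].
Proof.
move=> XF; rewrite inE => /existsP [x /andP [xX]].
case/orP; rewrite inE /= => /andP [e /andP [h1 h2]].
  by case: (edgeVF e) => /= xV _; case: (disjVF xV (subsetP XF x xX)).
by exists x.
Qed.

Lemma adjBU_intro (X : {set T}) x y :
  x \in X -> (y, x) \in bE B -> y \in U -> x \in U -> y \in adj BU X.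
Proof.
move=> xX e yU xU; rewrite inE; apply/existsP; exists x.
by rewrite xX /bedge orbC inE /= e yU xU.
Qed.

Lemma G1 (X : {set T}) : X \subset bF B :&: U -> m @: X \subset adj BU X.
Proof.
move=> XFU; apply/subsetP => _ /imsetP [f fX ->].
have := subsetP XFU f fX; rewrite inE => /andP [fF fU].
apply: (adjBU_intro fX); [by case: (ME (mF fF)) | | done].
by rewrite Um // FU0.
Qed.

Lemma card_m (X : {set T}) : X \subset U0 -> #|m @: X| = #|X|.
Proof.
move=> XU; apply: card_in_imset => x y xX yX; apply: m_inj; exact: (subsetP XU).
Qed.

Lemma FU_U0 (X : {set T}) : X \subset bF B :&: U -> X \subset U0.
Proof.
move=> s; apply/subsetP => x /(subsetP s); rewrite inE => /andP [xF _]; exact: FU0.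
Qed.

Lemma Hall_all (X : {set T}) : X \subset bF B :&: U -> #|X| <= #|adj BU X|.
Proof. move=> s; rewrite -(card_m (FU_U0 s)); exact: subset_leq_card (G1 s). Qed.

Lemma sc_of (X : {set T}) : X \subset bF B :&: U -> adj BU X \subset m @: X ->
  sc_set BU X.
Proof.
move=> s sub; split => //; split.
  have -> : adj BU X = m @: X by apply/eqP; rewrite eqEsubset sub G1.
  by rewrite card_m // FU_U0.
move=> S2 S2X; apply: Hall_all; exact: subset_trans S2X s.
Qed.

Lemma min_exists : forall n (X : {set T}), #|X| <= n -> X != set0 -> sc_set BU X ->
  exists S, minimal_sc BU S.
Proof.
elim => [|n IH] X cX nX scX.
  by move: nX; rewrite -card_gt0; case: #|X| cX.
case: (classic (exists S2 : {set T}, [/\ S2 \proper X, S2 != set0 & sc_set BU S2])).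
  move=> [S2 [pS nS scS]]; apply: (IH S2) => //.
  by rewrite -ltnS; apply: leq_trans (proper_card pS) cX.
move=> H; exists X; split => //; split => // S2 pS nS scS; apply: H; by exists S2.
Qed.

Lemma nonnull_min : ~~ ((bV B :&: U == set0) && (bF B :&: U == set0)) ->
  exists S, minimal_sc BU S.
Proof.
move=> nn.
have FUn : bF B :&: U != set0.
  apply/negP => /eqP F0; move: nn; rewrite F0 eqxx andbT => /set0Pn [v].
  rewrite inE => /andP [vV vU].
  have vU0 := UU0 vU.
  have : m v \in bF B :&: U by rewrite inE mVF // Um.
  by rewrite F0 inE.
apply: (@min_exists #|bF B :&: U| (bF B :&: U)) => //.
apply: sc_of => //; apply/subsetP => y /adjBUP.
case=> [|x xFU [e yU _]]; first exact: subsetIl.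
case: (edgeVF e) => /= yV _.
have yU0 := UU0 yU.
apply/imsetP; exists (m y); last by rewrite mK.
by rewrite inE mVF // Um.
Qed.

Section WithS.
Variable S : {set T}.
Hypothesis Smin : minimal_sc BU S.
Let A := adj BU S.
Let C := S :|: A.

Lemma SFU : S \subset bF B :&: U.
Proof. by case: Smin => _ [[]]. Qed.

Lemma AmS : A = m @: S.
Proof.
case: Smin => _ [[_ [cS _]] _]; apply/eqP; rewrite eq_sym eqEcard G1 ?SFU //=.
by rewrite card_m ?FU_U0 ?SFU // cS.
Qed.

Lemma inS f : f \in S -> [/\ f \in bF B, f \in U & f \in U0].
Proof.
move=> /(subsetP SFU); rewrite inE => /andP [fF fU]; split => //; exact: FU0.
Qed.

Lemma inC z : z \in C -> z \in S \/ exists2 f, f \in S & z = m f.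
Proof.
rewrite inE => /orP [zS|]; first by left.
by rewrite AmS => /imsetP [f fS ->]; right; exists f.
Qed.

Lemma mS_C f : f \in S -> m f \in C.
Proof. by move=> fS; rewrite inE AmS imset_f ?orbT. Qed.

Lemma S_C f : f \in S -> f \in C.
Proof. by move=> fS; rewrite inE fS. Qed.

Lemma C_m z : z \in C -> m z \in C.
Proof.
case/inC => [zS|[f fS ->]]; first exact: mS_C.
by case: (inS fS) => _ _ fU0; rewrite mK // S_C.
Qed.

Lemma C_U z : z \in C -> z \in U.
Proof.
case/inC => [zS|[f fS ->]]; first by case: (inS zS).
by case: (inS fS) => _ fU fU0; rewrite Um.
Qed.

Lemma CF z : z \in C -> z \in bF B -> z \in S.
Proof.
case/inC => [//|[f fS ->]] mfF.
by case: (inS fS) => fF _ _; case: (disjVF (mFV fF) mfF).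
Qed.

Lemma back a b : a \in U -> dE a b -> b \in C -> a \in C.
Proof.
move=> aU /dedge_cases [[_ ->]|[e _]]; first exact: C_m.
move=> bC; have [_ bF] := edgeVF e; have bS := CF bC bF.
rewrite inE; apply/orP; right; apply: (adjBU_intro bS e aU); exact: C_U.
Qed.

Lemma Inv_next : Inv (U :\: C).
Proof.
split.
- exact: subset_trans (subsetDl _ _) (let: And3 s _ _ := IU in s).
- move=> x y; rewrite inE => /andP [xnC xU] d.
  have yU : y \in U by case: IU => _ f _; exact: f _ _ xU d.
  rewrite inE yU andbT; apply/negP => yC; move/negP: xnC; apply; exact: back d yC.
- move=> x xU0; rewrite !in_setD Um //; congr (_ && _); congr negb.
  apply/idP/idP => h; last exact: C_m.
  by rewrite -(mK xU0); exact: C_m.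
Qed.

Lemma scc_C z : z \in C -> scc B M z \subset C.
Proof.
move=> zC; apply/subsetP => y; rewrite sccE => /and3P [_ zy yz].
have yU : y \in U.
  apply: (closed_connect_in _ (C_U zC) zy) => a b aU d.
  by case: IU => _ f _; exact: f _ _ aU d.
apply/negPn/negP => ynC.
have : z \in U :\: C.
  apply: (closed_connect_in _ _ yz); last by rewrite inE ynC.
  by case: Inv_next => _ f _.
by rewrite inE zC.
Qed.

Lemma claimA a b : a \in S -> b \in S -> connect dE a b.
Proof.
move=> aS bS; apply/idPn => nab.
pose R := [set f in S | connect dE a f].
pose T2 := S :\: R.
case: Smin => _ [_ mini].
apply: (mini T2).
- rewrite properE subsetDl /=; apply/subsetPn; exists a => //.
  by rewrite !inE aS connect0.
- by apply/set0Pn; exists b; rewrite !inE bS (negbTE nab).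
- have T2S : T2 \subset S by apply: subsetDl.
  apply: sc_of; first exact: subset_trans T2S SFU.
  apply/subsetP => y /adjBUP [].
    by apply: subset_trans T2S _; apply: subset_trans SFU (subsetIl _ _).
  move=> x xT [e yU xU].
  have xS := subsetP T2S x xT.
  have : y \in A by apply: adjBU_intro xS e yU xU.
  rewrite AmS => /imsetP [f' f'S yE].
  case f'R : (f' \in R); last first.
    by apply/imsetP; exists f' => //; rewrite inE f'R f'S.
  exfalso; move: xT; rewrite inE => /andP [/negP xR _]; apply: xR.
  rewrite inE xS /=.
  have af' : connect dE a f' by move: (f'R); rewrite inE => /andP [].
  have [f'F _ f'U0] := inS f'S.
  have [_ _ xU0] := inS xS.
  case yxM : ((y, x) \in M).
    have : y = m x by apply: MrE; rewrite Mr_sym /Mr yxM.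
    by rewrite yE => /(m_inj f'U0 xU0) <-.
  apply: (connect_trans af'); apply: (connect_trans (connect1 (dE_mF f'F))).
  rewrite -yE; apply: connect1; by rewrite /dedge e yxM /= orbT.
Qed.



Lemma S_U0 f : f \in S -> f \in U0.
Proof. by case/inS. Qed.
Lemma S_F f : f \in S -> f \in bF B.
Proof. by case/inS. Qed.
Lemma C_VF z : z \in C -> z \in VF.
Proof. by move=> /C_U /UU0 /U0VF. Qed.


Lemma claimB f0 : f0 \in S -> 1 < #|S| -> exists2 f, f \in S & dE (m f0) f.
Proof.
move=> f0S cS.
case: (boolP [exists f in S, dE (m f0) f]) => [/existsP [f /andP [fS d]]|nex].
  by exists f.
exfalso; case: Smin => _ [_ mini].
have TS : S :\ f0 \subset S by apply: subsetDl.
apply: (mini (S :\ f0)).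
- exact: properD1.
- by move: cS; rewrite (cardsD1 f0 S) f0S add1n ltnS card_gt0.
apply: sc_of; first exact: subset_trans TS SFU.
apply/subsetP => y /adjBUP [].
  by apply: subset_trans TS _; apply: subset_trans SFU (subsetIl _ _).
move=> x xT [e yU xU].
have xS := subsetP TS x xT.
have : y \in A by apply: adjBU_intro xS e yU xU.
rewrite AmS => /imsetP [f' f'S yE].
have xU0 := S_U0 xS; have f0U0 := S_U0 f0S.
case: (eqVneq f' f0) => [ef|nf].
  2: by apply/imsetP; exists f' => //; rewrite !inE nf f'S.
exfalso; move/existsP: nex; apply; exists x; rewrite xS /=.
rewrite -ef -yE /dedge; apply/orP; right; rewrite e /=; apply/negP => yxM.
have : y = m x by apply: MrE; rewrite Mr_sym /Mr yxM.
rewrite yE ef => /(m_inj f0U0 xU0) ex.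
by move: xT; rewrite -ex !inE eqxx.
Qed.

Lemma fromS d : d \in C -> exists2 f, f \in S & connect dE f d.
Proof.
case/inC => [dS|[f fS ->]]; first by exists d.
exists f => //; apply: connect1; apply: dE_mF; exact: S_F.
Qed.

Lemma toS c : 1 < #|S| -> c \in C -> exists2 f, f \in S & connect dE c f.
Proof.
move=> cS; case/inC => [c'S|[f fS ->]]; first by exists c.
have [g gS d] := claimB fS cS; exists g => //; exact: connect1.
Qed.

Lemma connC c d : 1 < #|S| -> c \in C -> d \in C -> connect dE c d.
Proof.
move=> cS cC dC; have [f fS cf] := toS cS cC; have [g gS gd] := fromS dC.
exact: connect_trans cf (connect_trans (claimA fS gS) gd).
Qed.


Lemma clC z : z \in C -> cl z = C.
Proof.
move=> zC; apply/eqP; rewrite eqEsubset; apply/andP; split.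
  apply/subsetP => y; rewrite inE => /orP [ys|/matchedP [x xs [xU ->]]].
    exact: subsetP (scc_C zC) y ys.
  apply: C_m; exact: subsetP (scc_C zC) x xs.
apply/subsetP => y yC.
case: (ltnP 1 #|S|) => cS.
  rewrite inE sccE C_VF //= !connC //.
have eqS : forall a b, a \in S -> b \in S -> a = b.
  move=> a b aS bS; move/card_le1P: cS => H.
  by have := H a aS b; rewrite bS inE => /esym/eqP ->.
have [ez|ez] : y = z \/ y = m z.
  case/inC: (zC) => [zS|[f fS ->]]; case/inC: (yC) => [yS|[g gS ->]].
  - left; exact: eqS yS zS.
  - right; rewrite (eqS g z gS zS); reflexivity.
  - right; rewrite (mK (S_U0 fS)); exact: eqS yS fS.
  - left; rewrite (eqS g f gS fS); reflexivity.
- rewrite ez; apply: cl_self; exact: C_VF.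
rewrite ez inE; apply/orP; right; apply/matchedP; exists z.
  rewrite sccE C_VF //. rewrite !connect0. reflexivity.
split; [ apply: UU0; exact: C_U zC | reflexivity].
Qed.

Lemma meetC w y : w \in VF -> y \in cl w -> y \in C -> cl w = C.
Proof.
move=> wVF.
have key : forall x, x \in scc B M w -> x \in C -> cl w = C.
  move=> x xs xC; apply: clC; apply: (subsetP (scc_C xC)).
  by move: xs; rewrite !sccE wVF => /and3P [_ h1 h2]; rewrite h1 h2.
rewrite inE => /orP [ys yC|/matchedP [x xs [xU ->]] mxC]; first exact: key ys yC.
by apply: (key x xs); rewrite -(mK xU); apply: C_m.
Qed.

Lemma edgesC x : ((x, C) \in (alg2_output B M).2) <-> x \in adj B S :\: A.
Proof.
have SF : S \subset bF B by apply: subset_trans SFU (subsetIl _ _).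
split.
  case/EdP => w [wVF xVF dw nc eC].
  have wC : w \in C by rewrite eC; apply: cl_self.
  have xnC : x \notin C by rewrite eC.
  case/dedge_cases: dw => [[_ ex]|[e _]].
    by move: xnC; rewrite ex C_m.
  have [_ wF] := edgeVF e.
  rewrite in_setD (adjB_intro (CF wC wF) e) andbT.
  by apply: contra xnC => xA; rewrite inE xA orbT.
rewrite in_setD => /andP [xnA /(adjBP SF) [f fS e]].
have [xV _] := edgeVF e.
have fC := S_C fS.
have nM : (x, f) \notin M.
  apply/negP => xfM; move/negP: xnA; apply.
  rewrite AmS; apply/imsetP; exists f => //; apply: MrE; by rewrite /Mr xfM orbT.
have xnC : x \notin C.
  rewrite inE negb_or xnA andbT; apply/negP => xS.
  by case: (disjVF xV (S_F xS)).
apply/EdP; exists f; split.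
- exact: C_VF.
- by rewrite /VF inE xV.
- by rewrite /dedge e nM /= orbT.
- by rewrite clC.
- by rewrite clC.
Qed.

Lemma C_n0 : exists z, z \in C.
Proof. case: Smin => /set0Pn [f fS] _; exists f; exact: S_C. Qed.

Lemma splitK w : w \in VF ->
  ~~ (cl w \subset U :\: C) = (cl w == C) || ~~ (cl w \subset U).
Proof.
move=> wVF.
case KU : (cl w \subset U); last first.
  rewrite orbT; apply/negP => sub; move/negP: KU; apply.
  exact: subset_trans sub (subsetDl _ _).
rewrite orbF; apply/idP/idP.
  case/subsetPn => y yK; rewrite in_setD (subsetP KU y yK) andbT negbK => yC.
  by rewrite (meetC wVF yK yC).
move/eqP => ->; have [z zC] := C_n0; apply/subsetPn; exists z => //.
by rewrite in_setD zC.
Qed.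

Lemma C_Cl : C \in (alg2_output B M).1.
Proof. have [z zC] := C_n0; apply/ClP; exists z; [exact: C_VF | by rewrite clC]. Qed.

Lemma step_G : Gof (U :\: C) =
  (C |: (Gof U).1, (Gof U).2 :|: [set (v, C) | v in adj B S :\: A]).
Proof.
rewrite /Gof /=; congr (_, _); apply/setP.
  move=> K; rewrite in_setU1 !in_sep1.
  case: (boolP (K \in _)) => [/ClP [w wVF ->]|nK] /=.
    by rewrite splitK.
  by case: eqP => // eK; move: nK; rewrite eK C_Cl.
move=> [x K]; rewrite in_setU !in_sep /=.
have imP : ((x, K) \in [set (v, C) | v in adj B S :\: A]) =
           (K == C) && (x \in adj B S :\: A).
  apply/imsetP/andP => [[v vD [-> ->]]|[/eqP -> xD]]; first by split; rewrite ?eqxx.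
  by exists x.
rewrite imP.
case: (boolP ((x, K) \in _)) => [xE|nE] /=.
  have [w [wVF _ _ _ eK]] := (EdP x K).1 xE.
  rewrite eK splitK //.
  case: (eqVneq (cl w) C) => [eC|nC].
    have xD : x \in adj B S :\: A by apply/edgesC; rewrite -eC -eK.
    by rewrite xD orbT.
  by rewrite /= orbF.
case: eqP => [eKC|] //=.
apply/esym/negbTE; apply: contra nE => xD; rewrite eKC; exact/edgesC.
Qed.



End WithS.
End Step.

Lemma noinW w z : w \in W -> ~~ dE z w.
Proof.
move=> wW; apply/negP => /dedge_cases [[/ME [_ /= wU _] _]|[/edgeVF [_ /= wF] _]].
  by move: (WnU0 wW); rewrite wU.
by case: (disjVF (subsetP WV w wW) wF).
Qed.

Lemma clW w : w \in W -> cl w = [set w].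
Proof.
move=> wW.
have sccw : scc B M w = [set w].
  apply/setP => y; rewrite sccE inE.
  apply/idP/idP => [/and3P [_ _ yw]|/eqP ->].
    by rewrite (connect_noin (fun z => noinW z wW) yw).
  by rewrite /VF inE (subsetP WV w wW) !connect0.
rewrite /cl sccw.
have -> : matched M [set w] = set0.
  apply/setP => y; rewrite in_set0; apply/negP => /matchedP [x].
  rewrite inE => /eqP -> [wU _].
  by move: (WnU0 wW); rewrite wU.
by rewrite setU0.
Qed.

Lemma fwdU0 : fwd U0.
Proof.
move=> x y _ /dedge_cases [[/ME [_ /= yU _] _]|[/edgeVF [_ /= yF] _]] //.
exact: FU0.
Qed.

Lemma Inv0 : Inv U0.
Proof. split; [exact: subxx | exact: fwdU0 | move=> x xU; by rewrite mU0 // xU]. Qed.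

Lemma clU0 x : x \in U0 -> cl x \subset U0.
Proof.
move=> xU; apply/subsetP => y; rewrite inE => /orP [|/matchedP [z zs [zU ->]]].
  by rewrite sccE => /and3P [_ xy _]; apply: (closed_connect_in _ xU xy); exact: fwdU0.
exact: mU0.
Qed.

Lemma Gof0 : Gof U0 = ([set [set w] | w in W], set0).
Proof.
rewrite /Gof; congr (_, _); apply/setP.
  move=> K; rewrite in_sep1.
  case: (boolP (K \in _)) => [/ClP [x xVF ->]|nK] /=.
    case: (boolP (x \in U0)) => xU.
      rewrite (clU0 xU) /=; apply/esym/negbTE; apply/negP => /imsetP [w wW ecl].
      have : x \in cl x by apply: cl_self.
      rewrite ecl inE => /eqP exw; by move: (WnU0 wW); rewrite -exw xU.
    have xW : x \in W.
      move: xVF xU; rewrite /VF /U0 !inE.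
      by case: (x \in W); case: (x \in bV B); case: (x \in bF B).
    by rewrite (clW xW) imset_f // sub1set xU.
  apply/esym/negbTE/negP => /imsetP [w wW eK]; move/negP: nK; apply.
  rewrite eK -(clW wW); apply/ClP; exists w => //.
  by rewrite /VF inE (subsetP WV w wW).
move=> [x K]; rewrite in_sep in_set0 /=.
case: (boolP ((x, K) \in _)) => [/EdP [w [wVF _ dw _ ->]]|] //=.
apply/negbTE; rewrite negbK; apply: clU0.
have wnW : w \notin W by apply/negP => wW; move: dw; rewrite (negbTE (noinW x wW)).
move: wVF wnW; rewrite /VF /U0 !inE.
by case: (w \in W); case: (w \in bV B); case: (w \in bF B).
Qed.

Lemma final U : Inv U -> null_graph (induced B U) -> Gof U = alg2_output B M.
Proof.
move=> [UU _ _] [/= V0 F0].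
have -> : U = set0.
  apply/setP => x; rewrite in_set0; apply/negP => xU.
  have := U0VF (subsetP UU x xU); rewrite /VF inE => /orP [xV|xF].
    have : x \in bV B :&: U by rewrite inE xV xU.
    by rewrite V0 inE.
  have : x \in bF B :&: U by rewrite inE xF xU.
  by rewrite F0 inE.
transitivity ((alg2_output B M).1, (alg2_output B M).2); last by case: (alg2_output B M).
rewrite /Gof; congr (_, _); apply/setP.
  move=> K; rewrite in_sep1; case: (boolP (K \in _)) => // /ClP [x xVF ->] /=.
  rewrite subset0; apply/set0Pn; exists x; exact: cl_self.
move=> [x K]; rewrite in_sep; case: (boolP (_ \in _)) => // /EdP [w [wVF _ _ _ ->]] /=.
rewrite subset0; apply/set0Pn; exists w; exact: cl_self.
Qed.


Lemma alg1_correct U G G' : alg1_from B U G G' -> Inv U -> G = Gof U ->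
  G' = alg2_output B M.
Proof.
move=> H; elim: H => {U G G'} [U G nul IU ->|U G S G' Smin _ IH IU EG].
  exact: final.
have HH := Inv_next IU Smin. apply: IH; first exact: HH.
by rewrite EG (step_G IU Smin).
Qed.

Lemma alg1_exists n : forall (U : {set T}) (G : cgraph T), #|U| <= n -> Inv U ->
  exists G', alg1_from B U G G'.
Proof.
elim: n => [|n IH] U G cU IU.
  exists G; apply: alg1_stop; move: cU; rewrite leqn0 => /eqP/cards0_eq ->.
  by split => /=; rewrite setI0.
case: (boolP ((bV B :&: U == set0) && (bF B :&: U == set0))) => [/andP [/eqP h1 /eqP h2]|nn].
  by exists G; apply: alg1_stop; split; [exact: h1 | exact: h2].
have [S Smin] := nonnull_min IU nn.
set C := S :|: adj (induced B U) S.
have cD : #|U :\: C| <= n.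
  have [z zC] := C_n0 Smin.
  rewrite -ltnS; apply: (leq_trans _ cU).
  rewrite -(cardsID C U) -add1n leq_add2r card_gt0; apply/set0Pn; exists z.
  by rewrite inE zC (C_U IU Smin zC).
have [G' HG'] := IH (U :\: C) (C |: G.1, G.2 :|: [set (v, C) | v in adj B S :\: adj (induced B U) S]) cD (Inv_next IU Smin).
exists G'; exact: alg1_step Smin HG'.
Qed.
End Main.

Theorem theorem6 (T : finType) (B : bigraph T) (W : {set T}) :
  wf_bigraph B ->
  W \subset bV B ->
  self_contained (induced B ((bV B :\: W) :|: bF B)) ->
  forall M : {set T * T},
    perfect_matching (induced B ((bV B :\: W) :|: bF B)) M ->
    (exists G, alg1_output B W G) /\
    (forall G, alg1_output B W G -> G = alg2_output B M).
Proof.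
move=> wf WV0 _ M pm; split.
  have [G HG] := alg1_exists wf pm ([set [set w] | w in W], set0) (leqnn _) (Inv0 wf pm).
  by exists G.
move=> G H.
exact: (alg1_correct wf pm H (Inv0 wf pm) (esym (Gof0 wf WV0 pm))).
Qed.
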